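(* Consider the setting and definitions in the context. Then $V_{con}-V_{adj}$ is positive semidefinite.
   Context: For each $n$, let $N_n=\{1,\dots,n\}$ and let $\{Y_{n,i}:i\in N_n\}$, $Y_{n,i}\in\mathbb{R}^v$, be random vectors with finite second moments (means may differ across $i$). Each $i$ has a cluster index $g(i)\in\{1,\dots,G\}$ and a time index $t(i)\in\{1,\dots,T\}$. Let $N_t^T=\{i:t(i)=t\}$, $N_g^G=\{i:g(i)=g\}$, $N_{t,g}^{T\cap G}=N_t^T\cap N_g^G$, and $y_t:=\sum_{i\in N_t^T}Y_{n,i}$. Let $M$ be a positive integer and $\omega(m,M)\in[0,1]$ kernel weights. Define $V_{con}:=\sum_{i\in N_n}\sum_{j\in N^G_{g(i)}}E[Y_{n,i}Y_{n,j}']+\sum_{i\in N_n}\sum_{j\in N^T_{t(i)}}E[Y_{n,i}Y_{n,j}']+\sum_{m=1}^M\omega(m,M)\left(\sum_{t=1}^{T-m}E[y_ty_{t+m}']+\sum_{t=1}^{T-m}E[y_{t+m}y_t']+2\sum_{t=1}^TE[y_ty_t']\right)$, $V_{adj}:=\sum_{i\in N_n}\sum_{j\in N^G_{g(i)}}\mathrm{Cov}(Y_{n,i},Y_{n,j})+\sum_{i\in N_n}\sum_{j\in N^T_{t(i)}}\mathrm{Cov}(Y_{n,i},Y_{n,j})-\sum_{i\in N_n}\sum_{j\in N^{T\cap G}_{t(i),g(i)}}\mathrm{Cov}(Y_{n,i},Y_{n,j})+\sum_{m=1}^M\sum_{t=1}^{T-m}\omega(m,M)\mathrm{Cov}(y_t,y_{t+m})+\sum_{m=1}^M\sum_{t=1}^{T-m}\omega(m,M)\mathrm{Cov}(y_{t+m},y_t)$,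 where $\mathrm{Cov}(X,Z)=E[XZ']-E[X]E[Z]'$. *)

(* Defs.v *)
From HB Require Import structures.
From mathcomp Require Import all_boot all_order all_algebra.
From mathcomp Require Import all_classical all_reals all_analysis.
Set Implicit Arguments. Unset Strict Implicit. Unset Printing Implicit Defensive.
Import Order.TTheory GRing.Theory Num.Theory.
Local Open Scope ring_scope.

Section Defs.
Context {d : measure_display} {Ω : measurableType d} {R : realType}.
Variable P : probability Ω R.
Variable v : nat.

Definition rvec := 'I_v -> Ω -> R.

Definition EM (X Z : rvec) : 'M[R]_v :=
  \matrix_(a < v, b < v) fine ('E_P[fun w => (X a w * Z b w)%R])%E.

Definition CovM (X Z : rvec) : 'M[R]_v :=
  \matrix_(a < v, b < v) fine (covariance P (X a) (Z b)).

Definition psd (A : 'M[R]_v) : Prop :=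
  A^T = A /\ forall x : 'cV[R]_v, 0 <= (x^T *m A *m x) 0 0.

Variables (n G T : nat) (Y : 'I_n -> rvec) (g : 'I_n -> 'I_G) (tm : 'I_n -> 'I_T).

(* y_t := sum over i with t(i) = t of Y_i; time periods are 0, ..., T-1 *)
Definition ysum (t : nat) : rvec :=
  fun a w => \sum_(i < n | (tm i : nat) == t) Y i a w.

Variables (M : nat) (omega : nat -> nat -> R).

Definition Vcon : 'M[R]_v :=
  \sum_(i < n) \sum_(j < n | g j == g i) EM (Y i) (Y j)
  + \sum_(i < n) \sum_(j < n | tm j == tm i) EM (Y i) (Y j)
  + \sum_(1 <= m < M.+1) omega m M *:
      (\sum_(0 <= t < T - m) EM (ysum t) (ysum (t + m))
       + \sum_(0 <= t < T - m) EM (ysum (t + m)) (ysum t)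
       + 2%:R *: \sum_(0 <= t < T) EM (ysum t) (ysum t)).

Definition Vadj : 'M[R]_v :=
  \sum_(i < n) \sum_(j < n | g j == g i) CovM (Y i) (Y j)
  + \sum_(i < n) \sum_(j < n | tm j == tm i) CovM (Y i) (Y j)
  - \sum_(i < n) \sum_(j < n | (tm j == tm i) && (g j == g i)) CovM (Y i) (Y j)
  + \sum_(1 <= m < M.+1) \sum_(0 <= t < T - m) omega m M *: CovM (ysum t) (ysum (t + m))
  + \sum_(1 <= m < M.+1) \sum_(0 <= t < T - m) omega m M *: CovM (ysum (t + m)) (ysum t).

End Defs.

(* Main.v *)
Require Import Defs.
From HB Require Import structures.
From mathcomp Require Import all_boot all_order all_algebra.
From mathcomp Require Import all_classical all_reals all_analysis.
From mathcomp Require Import ring lra zify.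
Import Order.TTheory GRing.Theory Num.Theory.
Local Open Scope ring_scope.

Section Scal.
Context {d : measure_display} {Ω : measurableType d} {R : realType}
  (P : probability Ω R).

Definition ex (f : Ω -> R) : R := fine ('E_P[f])%E.
Local Notation L2 f := (f \in Lfun P 2%:E).

Lemma L2_L1 f : L2 f -> f \in Lfun P 1.
Proof. by move=> h; apply: Lfun_subset12 => //; exact: fin_num_measure. Qed.

Lemma L2_sum (I : Type) (r : seq I) (p : pred I) (F : I -> Ω -> R) :
  (forall i, p i -> L2 (F i)) -> L2 (fun w => \sum_(i <- r | p i) F i w).
Proof.
move=> h; elim: r => [|x r IH].
  under eq_fun do rewrite big_nil.
  by rewrite -[(fun _ => 0)]/(cst 0); apply: Lfun_cst.
under eq_fun do rewrite big_cons.
case hx: (p x); last exact: IH.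
apply: rpredD => //; first by rewrite lee_fin ler1n.
by move=> ?; apply: h.
Qed.

Lemma L2_scale (a : R) f : L2 f -> L2 (fun w => a * f w).
Proof. move=> h; have -> : (fun w => a * f w) = a \o* f by apply: funext => w /=; rewrite mulrC. exact: (@Lfun_scale _ _ _ P f a 2 ltac:(by rewrite ler1n) h). Qed.

Lemma L1_mul f g : L2 f -> L2 g -> (fun w => f w * g w) \in Lfun P 1.
Proof. by move=> hf hg; apply: Lfun2_mul_Lfun1. Qed.

Lemma exD f g : f \in Lfun P 1 -> g \in Lfun P 1 ->
  ex (fun w => f w + g w) = ex f + ex g.
Proof.
move=> hf hg; rewrite /ex -[(fun w => f w + g w)]/(f \+ g) expectationD //.
by rewrite fineD // expectation_fin_num.
Qed.

Lemma exZ (a : R) f : f \in Lfun P 1 -> ex (fun w => a * f w) = a * ex f.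
Proof.
move=> hf; have -> : (fun w => a * f w) = a \o* f by apply: funext => w /=; rewrite mulrC.
rewrite /ex expectationZl //.
by rewrite fineM // expectation_fin_num.
Qed.

Lemma L1_sum (I : Type) (r : seq I) (p : pred I) (F : I -> Ω -> R) :
  (forall i, p i -> F i \in Lfun P 1) ->
  (fun w => \sum_(i <- r | p i) F i w) \in Lfun P 1.
Proof.
move=> h; elim: r => [|x r IH].
  under eq_fun do rewrite big_nil.
  by rewrite -[(fun _ => 0)]/(cst 0); apply: Lfun_cst.
under eq_fun do rewrite big_cons.
case hx: (p x); last exact: IH.
by apply: rpredD => //; apply: h.
Qed.

Lemma ex_sum (I : Type) (r : seq I) (p : pred I) (F : I -> Ω -> R) :
  (forall i, p i -> F i \in Lfun P 1) ->
  ex (fun w => \sum_(i <- r | p i) F i w) = \sum_(i <- r | p i) ex (F i).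
Proof.
move=> h; elim: r => [|x r IH].
  under eq_fun do rewrite big_nil.
  by rewrite big_nil /ex -[(fun _ => 0)]/(cst 0) expectation_cst.
under eq_fun do rewrite big_cons.
rewrite big_cons; case hx: (p x); last exact: IH.
by rewrite exD ?IH ?h //; apply: L1_sum.
Qed.

Definition cv (f g : Ω -> R) : R := fine (covariance P f g).

Lemma cvE f g : L2 f -> L2 g -> cv f g = ex (fun w => f w * g w) - ex f * ex g.
Proof.
move=> hf hg; have e : (f * g)%R = (fun w => f w * g w) by [].
have h1 := L1_mul _ _ hf hg; rewrite -e in h1.
have hf1 := L2_L1 _ hf; have hg1 := L2_L1 _ hg.
rewrite /cv covarianceE //.
rewrite fineB ?fin_numM ?expectation_fin_num //.
by rewrite fineM ?expectation_fin_num.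
Qed.

Lemma cv_ge0 f : 0 <= cv f f.
Proof. by apply: fine_ge0; have := variance_ge0 P f. Qed.

End Scal.
Section Quad.
Context {d : measure_display} {Ω : measurableType d} {R : realType}
  (P : probability Ω R) (v : nat) (x : 'cV[R]_v).
Local Notation L2 f := (f \in Lfun P 2%:E).

Definition qf (A : 'M[R]_v) : R := (x^T *m A *m x) 0 0.

Lemma qD A B : qf (A + B) = qf A + qf B.
Proof. by rewrite /qf mulmxDr mulmxDl mxE. Qed.
Lemma q0 : qf 0 = 0.
Proof. by rewrite /qf mulmx0 mul0mx mxE. Qed.
Lemma qN A : qf (- A) = - qf A.
Proof. by rewrite /qf mulmxN mulNmx mxE. Qed.
Lemma qB A B : qf (A - B) = qf A - qf B.
Proof. by rewrite qD qN. Qed.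
Lemma qZ c A : qf (c *: A) = c * qf A.
Proof. by rewrite /qf -scalemxAr -scalemxAl mxE. Qed.
Lemma q_sum (I : Type) (r : seq I) (p : pred I) (F : I -> 'M[R]_v) :
  qf (\sum_(i <- r | p i) F i) = \sum_(i <- r | p i) qf (F i).
Proof. exact: (big_morph qf qD q0). Qed.

Lemma qE A : qf A = \sum_(b < v) \sum_(a < v) x a 0 * A a b * x b 0.
Proof.
rewrite /qf mxE; apply: eq_bigr => b _; rewrite mxE big_distrl /=.
by apply: eq_bigr => a _; rewrite mxE.
Qed.

Definition S (X : 'I_v -> Ω -> R) : Ω -> R := fun w => \sum_(a < v) x a 0 * X a w.

Lemma L1_scale c (h : Ω -> R) : h \in Lfun P 1 -> (fun w => c * h w) \in Lfun P 1.
Proof.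
move=> hh; have -> : (fun w => c * h w) = c \o* h by apply: funext => w /=; rewrite mulrC.
exact: (@Lfun_scale _ _ _ P h c 1 (lexx _) hh).
Qed.

Lemma S_L2 X : (forall a, L2 (X a)) -> L2 (S X).
Proof. by move=> h; apply: L2_sum => a _; apply: L2_scale. Qed.

Lemma exS X : (forall a, L2 (X a)) -> ex P (S X) = \sum_(a < v) x a 0 * ex P (X a).
Proof.
move=> h; rewrite /S ex_sum; last by move=> a _; apply: L1_scale; apply: L2_L1.
by apply: eq_bigr => a _; rewrite exZ //; apply: L2_L1.
Qed.

Lemma qEM X Z : (forall a, L2 (X a)) -> (forall b, L2 (Z b)) ->
  qf (Defs.EM P X Z) = ex P (fun w => S X w * S Z w).
Proof.
move=> hX hZ.
have -> : (fun w => S X w * S Z w) =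
  (fun w => \sum_(b < v) \sum_(a < v) (x a 0 * x b 0) * (X a w * Z b w)).
  apply: funext => w; rewrite /S big_distrr /=; apply: eq_bigr => b _.
  rewrite big_distrl /=; apply: eq_bigr => a _.
  by rewrite mulrACA.
rewrite ex_sum; last first.
  move=> b _; apply: L1_sum => a _; apply: L1_scale; exact: L1_mul.
rewrite qE; apply: eq_bigr => b _.
rewrite ex_sum; last by move=> a _; apply: L1_scale; exact: L1_mul.
apply: eq_bigr => a _; rewrite exZ; last exact: L1_mul.
by rewrite mxE /ex mulrAC.
Qed.

Lemma qCov X Z : (forall a, L2 (X a)) -> (forall b, L2 (Z b)) ->
  qf (CovM P X Z) = ex P (fun w => S X w * S Z w) - ex P (S X) * ex P (S Z).
Proof.
move=> hX hZ; rewrite -qEM // [ex P (S X) * _]mulrC exS // exS // big_distrl /= !qE -sumrB.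
apply: eq_bigr => b _; rewrite big_distrr /= -sumrB; apply: eq_bigr => a _.
rewrite !mxE -[fine (covariance P (X a) (Z b))]/(cv P (X a) (Z b)) cvE // /ex; ring.
Qed.

End Quad.
Arguments qf {R v} x A. Arguments S {d Ω R v} x X.
Section Comb.
Context {R : realType}.

Lemma block_ge0 n (K : finType) (k : 'I_n -> K) (F : 'I_n -> 'I_n -> R) :
  (forall c : K, 0 <= \sum_(i | k i == c) \sum_(j | k j == c) F i j) ->
  0 <= \sum_(i < n) \sum_(j < n | k j == k i) F i j.
Proof.
move=> h; rewrite (partition_big k predT) //=; apply: sumr_ge0 => c _.
rewrite (eq_bigr (fun i => \sum_(j | k j == c) F i j)); first exact: h.
by move=> i /eqP ->.
Qed.

Lemma block_ge0c n (K : finType) (k : 'I_n -> K) (c : 'I_n -> 'I_n -> bool)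
  (F : 'I_n -> 'I_n -> R) : (forall i j, c i j = (k j == k i)) ->
  (forall c0 : K, 0 <= \sum_(i | k i == c0) \sum_(j | k j == c0) F i j) ->
  0 <= \sum_(i < n) \sum_(j < n | c i j) F i j.
Proof.
move=> hc h; rewrite (eq_bigr (fun i => \sum_(j < n | k j == k i) F i j)).
  exact: block_ge0.
by move=> i _; apply: eq_bigl => j; rewrite hc.
Qed.

Lemma dsum_diff n (c : 'I_n -> 'I_n -> bool) (e h : 'I_n -> 'I_n -> R) :
  \sum_(i < n) \sum_(j < n | c i j) e i j - \sum_(i < n) \sum_(j < n | c i j) (e i j - h i j)
  = \sum_(i < n) \sum_(j < n | c i j) h i j.
Proof.
rewrite -sumrB; apply: eq_bigr => i _; rewrite -sumrB; apply: eq_bigr => j _.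
by rewrite opprB addrC subrK.
Qed.

Lemma psq_ge0 n (p : pred 'I_n) (f : 'I_n -> R) :
  0 <= \sum_(i | p i) \sum_(j | p j) f i * f j.
Proof.
rewrite (eq_bigr (fun i => f i * \sum_(j | p j) f j)); last by move=> i _; rewrite mulr_sumr.
by rewrite -mulr_suml -expr2 sqr_ge0.
Qed.

Lemma sum_shift_le (f : nat -> R) k N : (forall t, 0 <= f t) ->
  \sum_(0 <= t < N) f (t + k)%N <= \sum_(0 <= t < N + k) f t.
Proof.
move=> f0; elim: N => [|N IH].
  by rewrite big_geq // sumr_ge0.
rewrite big_nat_recr //= addSn big_nat_recr //=.
by rewrite lerD2r.
Qed.

Lemma sum_mono_le (f : nat -> R) A B : (forall t, 0 <= f t) -> (A <= B)%N ->
  \sum_(0 <= t < A) f t <= \sum_(0 <= t < B) f t.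
Proof.
move=> f0 AB; rewrite (@big_cat_nat _ _ _ A 0 B _ _ (leq0n A) AB) /= lerDl.
by apply: sumr_ge0 => t _.
Qed.

Lemma sum_sub_le (f : nat -> R) k m T : (forall t, 0 <= f t) -> (k <= m)%N ->
  \sum_(0 <= t < T - m) f (t + k)%N <= \sum_(0 <= t < T) f t.
Proof.
move=> f0 km; case: (leqP T m) => Tm.
  have -> : (T - m = 0)%N by apply/eqP; rewrite subn_eq0.
  by rewrite big_geq // sumr_ge0.
apply: le_trans (sum_shift_le _ _ _ f0) _.
apply: sum_mono_le => //; lia.
Qed.

Lemma lag_ge0 (a V : nat -> R) T m : (forall t, a t ^+ 2 <= V t) ->
  0 <= \sum_(0 <= t < T - m) a t * a (t + m)%N
       + \sum_(0 <= t < T - m) a (t + m)%N * a t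
       + 2%:R * \sum_(0 <= t < T) V t.
Proof.
move=> aV.
have H : 0 <= \sum_(0 <= t < T - m) a (t + 0)%N ^+ 2
            + \sum_(0 <= t < T - m) a (t + m)%N ^+ 2
            + \sum_(0 <= t < T - m) a t * a (t + m)%N
            + \sum_(0 <= t < T - m) a (t + m)%N * a t.
  rewrite -!big_split /=; apply: sumr_ge0 => t _; rewrite addn0.
  have := sqr_ge0 (a t + a (t + m)%N); rewrite !expr2; nra.
have s1 := @sum_sub_le (fun t => a t ^+ 2) 0 m T (fun t => sqr_ge0 _) (leq0n _).
have s2 := @sum_sub_le (fun t => a t ^+ 2) m m T (fun t => sqr_ge0 _) (leqnn _).
have s3 : \sum_(0 <= t < T) a t ^+ 2 <= \sum_(0 <= t < T) V t.
  by apply: ler_sum => t _.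
simpl in s1, s2.
lra.
Qed.

End Comb.
Section Main.
Context {d : measure_display} {Ω : measurableType d} {R : realType}
  (P : probability Ω R) (v : nat).
Local Notation L2 f := (f \in Lfun P 2%:E).

Lemma EM_tr (X Z : 'I_v -> Ω -> R) : (Defs.EM P X Z)^T = Defs.EM P Z X.
Proof.
apply/matrixP => a b; rewrite !mxE; congr (fine _); congr (expectation _ _).
by apply: funext => w; rewrite mulrC.
Qed.

Lemma CovM_tr (X Z : 'I_v -> Ω -> R) : (CovM P X Z)^T = CovM P Z X.
Proof. by apply/matrixP => a b; rewrite !mxE covarianceC. Qed.

Lemma trD (A B : 'M[R]_v) : @trmx R v v (A + B) = A^T + B^T.
Proof. by apply/matrixP => i j; rewrite !mxE. Qed.
Lemma trB (A B : 'M[R]_v) : @trmx R v v (A - B) = A^T - B^T.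
Proof. by apply/matrixP => i j; rewrite !mxE. Qed.
Lemma trZ c (A : 'M[R]_v) : @trmx R v v (c *: A) = c *: A^T.
Proof. by apply/matrixP => i j; rewrite !mxE. Qed.
Lemma tr_sum I (r : seq I) (p : pred I) (F : I -> 'M[R]_v) :
  @trmx R v v (\sum_(i <- r | p i) F i) = \sum_(i <- r | p i) (F i)^T.
Proof. exact: raddf_sum. Qed.

Lemma symB (A B : 'M[R]_v) : A^T = A -> B^T = B -> (A - B)^T = A - B.
Proof. by move=> hA hB; rewrite trB hA hB. Qed.
Lemma symD (A B : 'M[R]_v) : A^T = A -> B^T = B -> (A + B)^T = A + B.
Proof. by move=> hA hB; rewrite trD hA hB. Qed.
Lemma symD_swap (A B C : 'M[R]_v) : A^T = A -> B^T = C -> C^T = B -> (A + B + C)^T = A + B + C.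
Proof. by move=> hA hB hC; rewrite !trD hA hB hC addrAC. Qed.
Lemma symD_swap2 (A B C : 'M[R]_v) : A^T = B -> B^T = A -> C^T = C -> (A + B + C)^T = A + B + C.
Proof. by move=> hA hB hC; rewrite !trD hA hB hC [B + A]addrC. Qed.
Lemma symZ c (A : 'M[R]_v) : A^T = A -> (c *: A)^T = c *: A.
Proof. by move=> hA; rewrite trZ hA. Qed.
Lemma tr_sumE I (r : seq I) (p : pred I) (F G : I -> 'M[R]_v) :
  (forall i, p i -> (F i)^T = G i) -> (\sum_(i <- r | p i) F i)^T = \sum_(i <- r | p i) G i.
Proof. by move=> h; rewrite tr_sum; apply: eq_bigr. Qed.

Lemma sym_dsum n (c : 'I_n -> 'I_n -> bool) (F : 'I_n -> 'I_n -> 'M[R]_v) :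
  (forall i j, c i j = c j i) -> (forall i j, (F i j)^T = F j i) ->
  @trmx R v v (\sum_(i < n) \sum_(j < n | c i j) F i j) = \sum_(i < n) \sum_(j < n | c i j) F i j.
Proof.
move=> hc hF; rewrite raddf_sum.
rewrite (eq_bigr (fun i => \sum_(j < n | c i j) F j i)); last first.
  by move=> i _; rewrite raddf_sum; apply: eq_bigr => j _; exact: hF.
rewrite (exchange_big_dep predT) //=; apply: eq_bigr => j _.
by apply: eq_bigl => i; rewrite hc.
Qed.

Lemma q_dsum (x : 'cV[R]_v) n (c : 'I_n -> 'I_n -> bool) (F : 'I_n -> 'I_n -> 'M[R]_v) G :
  (forall i j, qf x (F i j) = G i j) ->
  qf x (\sum_(i < n) \sum_(j < n | c i j) F i j) = \sum_(i < n) \sum_(j < n | c i j) G i j.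
Proof.
move=> h; rewrite q_sum; apply: eq_bigr => i _; rewrite q_sum.
by apply: eq_bigr => j _; apply: h.
Qed.

Lemma q_lag1 (x : 'cV[R]_v) M T (om : nat -> R) (F : nat -> nat -> 'M[R]_v) G :
  (forall m t, qf x (F m t) = G m t) ->
  qf x (\sum_(1 <= m < M.+1) \sum_(0 <= t < T - m) om m *: F m t)
  = \sum_(1 <= m < M.+1) \sum_(0 <= t < T - m) om m * G m t.
Proof.
move=> h; rewrite q_sum; apply: eq_bigr => m _; rewrite q_sum.
by apply: eq_bigr => t _; rewrite qZ h.
Qed.

Lemma q_lagc (x : 'cV[R]_v) M T (om : nat -> R) (F1 F2 : nat -> nat -> 'M[R]_v)
   (F3 : nat -> 'M[R]_v) G1 G2 G3 :
  (forall m t, qf x (F1 m t) = G1 m t) ->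
  (forall m t, qf x (F2 m t) = G2 m t) ->
  (forall t, qf x (F3 t) = G3 t) ->
  qf x (\sum_(1 <= m < M.+1) om m *: (\sum_(0 <= t < T - m) F1 m t
       + \sum_(0 <= t < T - m) F2 m t + 2%:R *: \sum_(0 <= t < T) F3 t))
  = \sum_(1 <= m < M.+1) om m * (\sum_(0 <= t < T - m) G1 m t
       + \sum_(0 <= t < T - m) G2 m t + 2%:R * \sum_(0 <= t < T) G3 t).
Proof.
move=> h1 h2 h3; rewrite q_sum; apply: eq_bigr => m _.
rewrite qZ !qD qZ !q_sum; congr (_ * (_ + _ + _ * _)).
- by apply: eq_bigr => t _.
- by apply: eq_bigr => t _.
- by apply: eq_bigr => t _.
Qed.

Lemma cell_ge0 n (Z : 'I_n -> Ω -> R) (p : pred 'I_n) : (forall i, L2 (Z i)) ->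
  0 <= \sum_(i | p i) \sum_(j | p j)
          (ex P (fun w => Z i w * Z j w) - ex P (Z i) * ex P (Z j)).
Proof.
move=> hZ.
pose W := fun w => \sum_(i | p i) Z i w.
have hW : L2 W by apply: L2_sum.
have H := cv_ge0 P W; rewrite cvE // in H.
suff E : ex P (fun w => W w * W w) - ex P W * ex P W =
  \sum_(i | p i) \sum_(j | p j)
          (ex P (fun w => Z i w * Z j w) - ex P (Z i) * ex P (Z j)) by rewrite -E.
have -> : (fun w => W w * W w) =
   (fun w => \sum_(i | p i) \sum_(j | p j) Z i w * Z j w).
  apply: funext => w; rewrite /W big_distrl /=; apply: eq_bigr => i _.
  by rewrite big_distrr.
rewrite ex_sum; last by move=> i _; apply: L1_sum => j _; apply: L1_mul.
rewrite /W ex_sum; last by move=> i _; apply: L2_L1.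
rewrite big_distrl /= -sumrB; apply: eq_bigr => i _.
rewrite ex_sum; last by move=> j _; apply: L1_mul.
by rewrite big_distrr /= -sumrB.
Qed.

End Main.
Theorem proposition1 (d : measure_display) (Ω : measurableType d) (R : realType)
  (P : probability Ω R) (v n G T : nat)
  (Y : 'I_n -> 'I_v -> Ω -> R) (g : 'I_n -> 'I_G) (tm : 'I_n -> 'I_T)
  (M : nat) (omega : nat -> nat -> R) :
  (forall i a, Y i a \in Lfun P 2%:E) ->
  (0 < M)%N ->
  (forall m, 0 <= omega m M <= 1) ->
  psd (Vcon P Y g tm M omega - Vadj P Y g tm M omega).
Proof.
move=> HY _ Hom.
have Hy : forall t a, ysum Y tm t a \in Lfun P 2%:E.
  by move=> t a; rewrite /ysum; apply: L2_sum => i _.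
split.
  rewrite /Vcon /Vadj.
  apply: symB; first apply: symD.
  - apply: symD; apply: sym_dsum => *; rewrite ?EM_tr // eq_sym //.
  - apply: tr_sumE => m _; apply: symZ; apply: symD_swap2.
    + by apply: tr_sumE => t _; exact: EM_tr.
    + by apply: tr_sumE => t _; exact: EM_tr.
    + by apply: symZ; apply: tr_sumE => t _; exact: EM_tr.
  apply: symD_swap.
  - apply: symB; first (apply: symD; apply: sym_dsum => *; rewrite ?CovM_tr // eq_sym //).
    apply: sym_dsum => *; rewrite ?CovM_tr // [tm _ == _]eq_sym [g _ == _]eq_sym //.
  - apply: tr_sumE => m _; apply: tr_sumE => t _; rewrite trZ CovM_tr //.
  - apply: tr_sumE => m _; apply: tr_sumE => t _; rewrite trZ CovM_tr //.
move=> x.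
change (0 <= qf x (Vcon P Y g tm M omega - Vadj P Y g tm M omega)).
have qEY : forall i j, qf x (Defs.EM P (Y i) (Y j)) = ex P (fun w => S x (Y i) w * S x (Y j) w).
  by move=> i j; apply: qEM.
have qCY : forall i j, qf x (CovM P (Y i) (Y j)) =
   ex P (fun w => S x (Y i) w * S x (Y j) w) - ex P (S x (Y i)) * ex P (S x (Y j)).
  by move=> i j; apply: qCov.
have qEy : forall s t, qf x (Defs.EM P (ysum Y tm s) (ysum Y tm t)) =
   ex P (fun w => S x (ysum Y tm s) w * S x (ysum Y tm t) w).
  by move=> s t; apply: qEM.
have qCy : forall s t, qf x (CovM P (ysum Y tm s) (ysum Y tm t)) =
   ex P (fun w => S x (ysum Y tm s) w * S x (ysum Y tm t) w)
   - ex P (S x (ysum Y tm s)) * ex P (S x (ysum Y tm t)).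
  by move=> s t; apply: qCov.
rewrite /Vcon /Vadj !(qD, qN).
rewrite !(@q_dsum R v x n _ _ _ qEY) !(@q_dsum R v x n _ _ _ qCY).
rewrite (@q_lagc R v x M T _ _ _ _ _ _ _ (fun m t => qEy t (t + m)%N) (fun m t => qEy (t + m)%N t) (fun t => qEy t t)).
rewrite (@q_lag1 R v x M T _ _ _ (fun m t => qCy t (t + m)%N)).
rewrite (@q_lag1 R v x M T _ _ _ (fun m t => qCy (t + m)%N t)).
have F1 : 0 <= \sum_(i < n)
     \sum_(j < n | g j == g i) ex P (fun w : Ω => S x (Y i) w * S x (Y j) w) -
   \sum_(i < n)
      \sum_(j < n | g j == g i)
         (ex P (fun w : Ω => S x (Y i) w * S x (Y j) w) -
          ex P (S x (Y i)) * ex P (S x (Y j))).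
  rewrite dsum_diff; apply: (@block_ge0c _ _ _ g) => // c0; exact: psq_ge0.
have F2 : 0 <= \sum_(i < n)
     \sum_(j < n | tm j == tm i) ex P (fun w : Ω => S x (Y i) w * S x (Y j) w) -
   \sum_(i < n)
      \sum_(j < n | tm j == tm i)
         (ex P (fun w : Ω => S x (Y i) w * S x (Y j) w) -
          ex P (S x (Y i)) * ex P (S x (Y j))).
  rewrite dsum_diff; apply: (@block_ge0c _ _ _ tm) => // c0; exact: psq_ge0.
have F3 : 0 <= \sum_(i < n)
      \sum_(j < n | (tm j == tm i) && (g j == g i))
         (ex P (fun w : Ω => S x (Y i) w * S x (Y j) w) -
          ex P (S x (Y i)) * ex P (S x (Y j))).
  apply: (@block_ge0c _ _ _ (fun i => (tm i, g i))) => [i j|c0]; first by rewrite xpair_eqE.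
  apply: cell_ge0 => i; exact: S_L2.
have F4 : 0 <= \sum_(1 <= m < M.+1)
     omega m M *
     (\sum_(0 <= t < T - m)
         ex P (fun w : Ω => S x (ysum Y tm t) w * S x (ysum Y tm (t + m)) w) +
      \sum_(0 <= t < T - m)
         ex P (fun w : Ω => S x (ysum Y tm (t + m)) w * S x (ysum Y tm t) w) +
      2 *
      \sum_(0 <= t < T)
         ex P (fun w : Ω => S x (ysum Y tm t) w * S x (ysum Y tm t) w)) -
   \sum_(1 <= m < M.+1)
      \sum_(0 <= t < T - m)
         omega m M *
         (ex P (fun w : Ω => S x (ysum Y tm t) w * S x (ysum Y tm (t + m)) w) -
          ex P (S x (ysum Y tm t)) * ex P (S x (ysum Y tm (t + m)))) -
   \sum_(1 <= m < M.+1)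
      \sum_(0 <= t < T - m)
         omega m M *
         (ex P (fun w : Ω => S x (ysum Y tm (t + m)) w * S x (ysum Y tm t) w) -
          ex P (S x (ysum Y tm (t + m))) * ex P (S x (ysum Y tm t))).
  rewrite -!sumrB; apply: sumr_ge0 => m _.
  rewrite -!mulr_sumr.
  have om0 : 0 <= omega m M by case/andP: (Hom m).
  set A := \sum_(0 <= t < T - m) _.
  set B := \sum_(0 <= t < T - m) ex P (fun w => S x (ysum Y tm (t + m)) w * S x (ysum Y tm t) w).
  set C := \sum_(0 <= t < T) _.
  set A' := \sum_(0 <= t < T - m) (_ - _).
  set B' := \sum_(0 <= t < T - m) (ex P (fun w => S x (ysum Y tm (t + m)) w * S x (ysum Y tm t) w) - _).
  have -> : omega m M * (A + B + 2 * C) - omega m M * A' - omega m M * B' =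
     omega m M * ((A - A') + (B - B') + 2 * C) by ring.
  apply: mulr_ge0 => //.
  have eA : A - A' = \sum_(0 <= t < T - m) ex P (S x (ysum Y tm t)) * ex P (S x (ysum Y tm (t + m))).
    by rewrite /A /A' -sumrB; apply: eq_bigr => t _; rewrite opprB addrC subrK.
  have eB : B - B' = \sum_(0 <= t < T - m) ex P (S x (ysum Y tm (t + m))) * ex P (S x (ysum Y tm t)).
    by rewrite /B /B' -sumrB; apply: eq_bigr => t _; rewrite opprB addrC subrK.
  rewrite eA eB /C.
  apply: (@lag_ge0 _ (fun t => ex P (S x (ysum Y tm t)))
              (fun t => ex P (fun w => S x (ysum Y tm t) w * S x (ysum Y tm t) w))).
  move=> t /=; have := cv_ge0 P (S x (ysum Y tm t)); rewrite cvE; last 2 first.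
  - exact: S_L2.
  - exact: S_L2.
  by rewrite expr2 subr_ge0.
lra.
Qed.
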